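(* In the imperfect-anticipation two-period setting described in the context, suppose: (i) $\{Y_{i0}(a,d),Y_{i1}(d),D_i,A_i\}_{i=1}^n$ are i.i.d. across $i$; (ii) $Y_{i0}(0,0)=Y_{i0}(0,1)=Y_{i0}(1,0)=Y_{i0}(-1,1)$ and $Y_{i0}(-1,0)=Y_{i0}(1,1)$; (iii) $\mathbb{E}[g(Y_{i1}(0))-g(Y_{i0}(0,0))\mid D_i=1]=\mathbb{E}[g(Y_{i1}(0))-g(Y_{i0}(0,0))\mid D_i=0]$; (iv) $\mathbb{P}[A_i\neq0\mid D_i=1]\le\pi$, $\mathbb{P}[A_i\neq0\mid D_i=0]\le\pi$, and $\mathbb{P}[A_i=-1\mid D_i=1,A_i\ne0]=\mathbb{P}[A_i=-1\mid D_i=0,A_i\ne0]=\varepsilon$; (v) $|\tau_g|\le|\mu_g|$. Let $m_g=\mathbb{E}[g(Y_{i1})-g(Y_{i0})\mid D_i=1]-\mathbb{E}[g(Y_{i1})-g(Y_{i0})\mid D_i=0]$, $\mu_{g,1}(\varepsilon)=\frac{m_g}{1+\operatorname{sgn}(\tau_g\mu_g)\pi\varepsilon}$ and $\mu_{g,2}(\varepsilon)=\frac{m_g}{1-\operatorname{sgn}(\tau_g\mu_g)\pi(1-\varepsilon)}$. Then \[\mu_g\in\left[\min\{\mu_{g,1}(\varepsilon),\mu_{g,2}(\varepsilon)\},\ \max\{\mu_{g,1}(\varepsilon),\mu_{g,2}(\varepsilon)\}\right].\]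
   Context: Two periods $t\in\{0,1\}$, units $i=1,\dots,n$. Each unit has an observed binary treatment $D_i\in\{0,1\}$ (in period 1) and an unobserved anticipation status $A_i\in\{-1,0,1\}$ in period 0: $A_i=0$ means no anticipation, $A_i=1$ means the unit anticipates and its anticipated treatment status equals its actual $D_i$, $A_i=-1$ means it anticipates incorrectly (anticipated status $1-D_i$). Potential outcomes: period 0, $Y_{i0}(a,d)$ for $a\in\{-1,0,1\}$, $d\in\{0,1\}$; period 1, $Y_{i1}(d)$. Observed outcomes: $Y_{i0}=Y_{i0}(A_i,D_i)$, $Y_{i1}=Y_{i1}(D_i)$. $g$ is a known measurable real function with finite expectations of $g$ of the outcomes; $\pi\in(0,1)$ and $\varepsilon\in[0,1]$ are given. Parameter of interest: $\mu_g=\mathbb{E}[g(Y_{i1}(1))-g(Y_{i1}(0))\mid D_i=1]$. The anticipatory effect $\tau_g$ is defined by $\tau_g=\mathbb{E}[g(Y_{i0}(1,1))-g(Y_{i0}(0,0))\mid D_i=1,A_i=1]=\mathbb{E}[g(Y_{i0}(-1,0))-g(Y_{i0}(0,0))\mid D_i=1,A_i=-1]$, the model requiring these two quantities to be equal. $\operatorname{sgn}$ is the sign function. *)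

(* Defs.v *)
From HB Require Import structures.
From mathcomp Require Import all_boot all_order all_algebra.
From mathcomp Require Import all_classical all_reals all_analysis.
Set Implicit Arguments. Unset Strict Implicit. Unset Printing Implicit Defensive.
Import Order.TTheory GRing.Theory Num.Theory.
Local Open Scope classical_set_scope.
Local Open Scope ring_scope.

Inductive antic : Type := Aminus | Azero | Aplus.

Section Defs.
Context {d : measure_display} {T : measurableType d} {R : realType}.

(* Conditional expectation of a real random variable f given an event B:
   E[f | B] = E[f 1_B] / P(B)   (with the convention x/0 = 0). *)
Definition cexp (P : probability T R) (f : T -> R) (B : set T) : R :=
  fine (\int[P]_(x in B) (f x)%:E) / fine (P B).

(* Conditional probability P[A | B] = P(A /\ B) / P(B) (x/0 = 0). *)
Definition cprob (P : probability T R) (A B : set T) : R :=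
  fine (P (A `&` B)) / fine (P B).

End Defs.

(* Main.v *)
Require Import Defs.
From HB Require Import structures.
From mathcomp Require Import all_boot all_order all_algebra.
From mathcomp Require Import all_classical all_reals all_analysis.
From mathcomp Require Import ring lra measurable_realfun.
Import Order.TTheory GRing.Theory Num.Theory.
Local Open Scope classical_set_scope.
Local Open Scope ring_scope.

Definition antic_eqb (a b : antic) : bool :=
  match a, b with Aminus, Aminus | Azero, Azero | Aplus, Aplus => true | _, _ => false end.
Lemma antic_eqP : Equality.axiom antic_eqb.
Proof. by case; case; constructor. Qed.
HB.instance Definition _ := hasDecEq.Build antic antic_eqP.

Section M.
Context {d : measure_display} {T : measurableType d} {R : realType}.
Variable P : probability T R.

Definition Ir (f : T -> R) (B : set T) : R := fine (\int[P]_(x in B) (f x)%:E).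
Definition pr (B : set T) : R := fine (P B).
Definition intg (f : T -> R) := P.-integrable setT (EFin \o f).

Lemma intgB f h : intg f -> intg h -> intg (fun x => f x - h x).
Proof.
move=> fi hi; rewrite /intg.
rewrite (_ : _ \o _ = (EFin \o f) \- (EFin \o h))%E; last by apply/funext=> x /=; rewrite EFinB.
exact: integrableB.
Qed.

Lemma intgD f h : intg f -> intg h -> intg (fun x => f x + h x).
Proof.
move=> fi hi; rewrite /intg.
rewrite (_ : _ \o _ = (EFin \o f) \+ (EFin \o h))%E; last by apply/funext=> x /=; rewrite EFinD.
exact: integrableD.
Qed.

Lemma intg_fin f B : measurable B -> intg f -> (\int[P]_(x in B) (f x)%:E)%E \is a fin_num.
Proof. by move=> mB fi; apply: (integrable_fin_num mB); exact: (integrableS measurableT mB (@subsetT _ B) fi). Qed.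

Lemma Ir_ext f h B : (forall x, B x -> f x = h x) -> Ir f B = Ir h B.
Proof. by move=> fh; rewrite /Ir; congr fine; apply: eq_integral => x /[!inE] /fh ->. Qed.

Lemma Ir_add f h B : measurable B -> intg f -> intg h ->
  Ir (fun x => f x + h x) B = Ir f B + Ir h B.
Proof.
move=> mB fi hi; rewrite /Ir -fineD ?intg_fin //.
congr fine; rewrite -integralD_EFin //; [exact: integrableS fi|exact: (integrableS measurableT mB (@subsetT _ B) hi)].
Qed.

Lemma Ir_sub f h B : measurable B -> intg f -> intg h ->
  Ir (fun x => f x - h x) B = Ir f B - Ir h B.
Proof.
move=> mB fi hi; rewrite /Ir -fineB ?intg_fin //.
congr fine; under eq_integral do rewrite EFinB.
rewrite integralB_EFin //; [exact: integrableS fi|exact: (integrableS measurableT mB (@subsetT _ B) hi)].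
Qed.

Lemma Ir_piece (c : T -> bool) f h1 h2 B : measurable B -> measurable [set x | c x] ->
  intg h1 -> intg h2 ->
  (forall x, B x -> c x -> f x = h1 x) -> (forall x, B x -> ~~ c x -> f x = h2 x) ->
  Ir f B = Ir h1 (B `&` [set x | c x]) + Ir h2 (B `&` [set x | ~~ c x]).
Proof.
move=> mB mc i1 i2 e1 e2.
have mc' : measurable [set x | ~~ c x].
  rewrite (_ : [set x | ~~ c x] = ~` [set x | c x]); first exact: measurableC.
  by apply/seteqP; split => x /=; case: (c x).
rewrite (@Ir_ext f (fun x => if c x then h1 x else h2 x) B); last first.
  by move=> x Bx; case: ifP => cx; [exact: e1|apply: e2 => //; rewrite cx].
rewrite {1}(_ : B = (B `&` [set x | c x]) `|` (B `&` [set x | ~~ c x])); last first.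
  apply/seteqP; split => x /=; first by case: (c x) => Bx; [left|right].
  by case=> -[].
rewrite /Ir integral_setU; first last.
- by apply/disj_setPS => x /= [[_ ->] [_]].
- apply/measurable_EFinP; apply: (measurable_funS measurableT (@subsetT _ _)).
  apply: measurable_fun_ifT.
  + apply: (measurable_fun_bool true); rewrite setTI.
    by rewrite (_ : _ @^-1` _ = [set x | c x]) //; apply/seteqP; split => x /=.
  + by apply/measurable_EFinP; exact: measurable_int i1.
  + by apply/measurable_EFinP; exact: measurable_int i2.
- exact: measurableI.
- exact: measurableI.
rewrite -fineD; last first.
- exact: (@intg_fin h2 _ (measurableI _ _ mB mc') i2).
- exact: (@intg_fin h1 _ (measurableI _ _ mB mc) i1).
congr fine; congr (_ + _)%E; apply: eq_integral => x /[!inE].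
  by case=> _ ->.
by case=> _ /negbTE ->.
Qed.


Lemma pr_ge0 B : 0 <= pr B.
Proof. by apply: fine_ge0; exact: measure_ge0. Qed.

Lemma pr_U B C : measurable B -> measurable C -> [disjoint B & C] ->
  pr (B `|` C) = pr B + pr C.
Proof.
move=> mB mC dBC; rewrite /pr measureU //; last exact/disj_set2P.
by rewrite fineD //; exact: fin_num_measure.
Qed.

Lemma Ir_mul f B t : measurable B -> intg f -> t = Ir f B / pr B -> Ir f B = t * pr B.
Proof.
move=> mB fi ->; have [p0|pn0] := eqVneq (pr B) 0; last by rewrite divfK.
rewrite p0 mulr0 /Ir null_set_integral //.
- by apply: (measurable_funS measurableT (@subsetT _ _)); exact: (measurable_int _ fi).
- have := fineK (fin_num_measure P B mB); rewrite -/(pr B) p0 => h.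
  exact: (esym h).
Qed.

End M.

Lemma minmax_of (R : realDomainType) (a b x : R) :
  (a <= x <= b) \/ (b <= x <= a) -> Num.min a b <= x <= Num.max a b.
Proof.
case=> /andP[h1 h2]; apply/andP; split.
- by rewrite ge_min h1.
- by rewrite le_max h2 orbT.
- by rewrite ge_min h1 orbT.
- by rewrite le_max h2.
Qed.

Lemma alg_main (R : realFieldType) (pi eps mu tau a b : R) :
  0 < pi < 1 -> 0 <= eps <= 1 ->
  0 <= a <= pi * (1 - eps) -> 0 <= b <= pi * eps ->
  `|tau| <= `|mu| ->
  let m := mu - tau * (a - b) in
  let s := Num.sg (tau * mu) in
  Num.min (m / (1 + s * pi * eps)) (m / (1 - s * pi * (1 - eps))) <= mu <=
  Num.max (m / (1 + s * pi * eps)) (m / (1 - s * pi * (1 - eps))).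
Proof.
move=> /andP[p0 p1] /andP[e0 e1] /andP[a0 a1] /andP[b0 b1] htm /=.
apply: minmax_of.
have [tm0|tmpos|tmneg] := ltgtP (tau * mu) 0; last first.
-
  have t0 : tau = 0.
    move/eqP: tmneg; rewrite mulf_eq0 => /orP[/eqP//|/eqP mu0].
    by move: htm; rewrite mu0 normr0 normr_le0 => /eqP.
  rewrite tmneg sgr0 t0 !mul0r !subr0 !addr0 !divr1 lexx.
  by left.
-
  rewrite gtr0_sg // !mul1r.
  have d1 : 0 < 1 + pi * eps by nra.
  have d2 : 0 < 1 - pi * (1 - eps) by nra.
  have [mupos|muneg] := ltP 0 mu.
  + have tpos : 0 < tau by rewrite -(pmulr_lgt0 _ mupos).
    have tle : tau <= mu by move: htm; rewrite !gtr0_norm.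
    left; apply/andP; split.
    * rewrite ler_pdivrMr //; nra.
    * rewrite ler_pdivlMr //; nra.
  + have mneg : mu < 0.
      rewrite lt_neqAle muneg andbT; apply/eqP => mu0; move: tmpos; rewrite mu0 mulr0 ltxx //.
    have tneg : tau < 0 by rewrite -(nmulr_lgt0 _ mneg).
    have tle : mu <= tau by move: htm; rewrite !ltr0_norm // lerN2.
    right; apply/andP; split.
    * rewrite ler_pdivrMr //; nra.
    * rewrite ler_pdivlMr //; nra.
- rewrite ltr0_sg // !mulN1r.
  have d1 : 0 < 1 + - pi * eps by nra.
  have d2 : 0 < 1 - - pi * (1 - eps) by nra.
  have [mupos|muneg] := ltP 0 mu.
  + have tneg : tau < 0 by rewrite -(pmulr_llt0 _ mupos).
    have tle : - tau <= mu by move: htm; rewrite (ltr0_norm tneg) (gtr0_norm mupos).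
    right; apply/andP; split.
    * rewrite ler_pdivrMr //; nra.
    * rewrite ler_pdivlMr //; nra.
  + have mneg : mu < 0.
      rewrite lt_neqAle muneg andbT; apply/eqP => mu0; move: tm0; rewrite mu0 mulr0 ltxx //.
    have tpos : 0 < tau by rewrite -(nmulr_llt0 _ mneg).
    have tle : tau <= - mu by move: htm; rewrite (gtr0_norm tpos) (ltr0_norm mneg).
    left; apply/andP; split.
    * rewrite ler_pdivrMr //; nra.
    * rewrite ler_pdivlMr //; nra.
Qed.

Lemma split_eps (R : realFieldType) (N a M eps : R) :
  N = a + M -> 0 <= a -> 0 <= M -> M / N = eps -> M = eps * N.
Proof.
move=> eN a0 M0 he; have [N0|Nn0] := eqVneq N 0.
  by rewrite N0 mulr0; lra.
by rewrite -he divfK.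
Qed.

Lemma key_alg (R : fieldType) (P1 P0 mu tau I01 I00 pa pb : R) :
  P1 != 0 -> P0 != 0 -> I01 / P1 = I00 / P0 ->
  (mu * P1 + I01 - tau * pa) / P1 - (I00 - tau * pb) / P0 = mu - tau * (pa / P1 - pb / P0).
Proof.
move=> h1 h0 e.
rewrite [(_ - _) / P1]mulrBl mulrDl e mulfK // mulrBl; ring.
Qed.

Theorem theorem3 (d : measure_display) (T : measurableType d) (R : realType)
  (P : probability T R)
  (Y0 : antic -> bool -> T -> R) (Y1 : bool -> T -> R)
  (D : T -> bool) (A : T -> antic) (g : R -> R) (pi eps : R) :
  (0 < pi < 1) -> (0 <= eps <= 1) ->
  measurable_fun setT g ->
  (forall a b, measurable_fun setT (Y0 a b)) ->
  (forall b, measurable_fun setT (Y1 b)) ->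
  (forall b, measurable [set x | D x = b]) ->
  (forall a, measurable [set x | A x = a]) ->
  (forall a b, P.-integrable setT (fun x => (g (Y0 a b x))%:E)) ->
  (forall b, P.-integrable setT (fun x => (g (Y1 b x))%:E)) ->
  (0 < fine (P [set x | D x = true])) ->
  (0 < fine (P [set x | D x = false])) ->
  let D1 := [set x | D x = true] in
  let D0 := [set x | D x = false] in
  let Yobs0 := fun x => Y0 (A x) (D x) x in
  let Yobs1 := fun x => Y1 (D x) x in
  let mu := cexp P (fun x => g (Y1 true x) - g (Y1 false x)) D1 in
  let tau := cexp P (fun x => g (Y0 Aplus true x) - g (Y0 Azero false x))
                    (D1 `&` [set x | A x = Aplus]) in
  (* model requirement defining tau_g (second expression read with D_i = 0) *)
  tau = cexp P (fun x => g (Y0 Aminus false x) - g (Y0 Azero false x))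
               (D0 `&` [set x | A x = Aminus]) ->
  (* (ii) *)
  (forall x, Y0 Azero false x = Y0 Azero true x /\
             Y0 Azero false x = Y0 Aplus false x /\
             Y0 Azero false x = Y0 Aminus true x /\
             Y0 Aminus false x = Y0 Aplus true x) ->
  (* (iii) parallel trends *)
  cexp P (fun x => g (Y1 false x) - g (Y0 Azero false x)) D1 =
  cexp P (fun x => g (Y1 false x) - g (Y0 Azero false x)) D0 ->
  (* (iv) *)
  cprob P [set x | A x <> Azero] D1 <= pi ->
  cprob P [set x | A x <> Azero] D0 <= pi ->
  cprob P [set x | A x = Aminus] (D1 `&` [set x | A x <> Azero]) = eps ->
  cprob P [set x | A x = Aminus] (D0 `&` [set x | A x <> Azero]) = eps ->
  (* (v) *)
  `|tau| <= `|mu| ->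
  let m := cexp P (fun x => g (Yobs1 x) - g (Yobs0 x)) D1
           - cexp P (fun x => g (Yobs1 x) - g (Yobs0 x)) D0 in
  let s := Num.sg (tau * mu) in
  let mu1 := m / (1 + s * pi * eps) in
  let mu2 := m / (1 - s * pi * (1 - eps)) in
  Num.min mu1 mu2 <= mu <= Num.max mu1 mu2.
Proof.
move=> hpi heps mg mY0 mY1 mD mA iY0 iY1 P1pos P0pos D1 D0 Yobs0 Yobs1 mu tau
  htau hii hpt hp1 hp0 he1 he0 hv; cbv zeta.
set G00 := fun x => g (Y0 Azero false x).
set G11 := fun x => g (Y0 Aplus true x).
set H1 := fun x => g (Y1 true x).
set H0 := fun x => g (Y1 false x).
have iG00 : intg P G00 by exact: iY0.
have iG11 : intg P G11 by exact: iY0.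
have iH1 : intg P H1 by exact: iY1.
have iH0 : intg P H0 by exact: iY1.
have iGd := @intgB _ _ _ P _ _ iG11 iG00.
have iH10 := @intgB _ _ _ P _ _ iH1 iH0.
have iH0G := @intgB _ _ _ P _ _ iH0 iG00.
have eAm0 x : g (Y0 Aminus false x) = G11 x by rewrite /G11 (proj2 (proj2 (proj2 (hii x)))).
have eZ1 x : g (Y0 Azero true x) = G00 x by rewrite /G00 (proj1 (hii x)).
have eP0 x : g (Y0 Aplus false x) = G00 x by rewrite /G00 (proj1 (proj2 (hii x))).
have eM1 x : g (Y0 Aminus true x) = G00 x by rewrite /G00 (proj1 (proj2 (proj2 (hii x)))).
have setE a : [set x | A x == a] = [set x | A x = a].
  by apply/seteqP; split => x /= /eqP.
have setNE a : [set x | ~~ (A x == a)] = [set x | A x <> a].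
  by apply/seteqP; split => x /= /eqP.
have mc a : measurable [set x | A x == a] by rewrite setE.
have mD1 : measurable D1 by exact: mD.
have mD0 : measurable D0 by exact: mD.
have iK2 := @intgD _ _ _ P _ _ iH10 iH0G.
have iK1 := @intgB _ _ _ P _ _ iK2 iGd.
have mD1p := measurableI _ _ mD1 (mc Aplus).
have mcn a : measurable [set x | ~~ (A x == a)].
  rewrite (_ : [set x | ~~ (A x == a)] = ~` [set x | A x == a]); first exact: measurableC.
  by apply/seteqP; split => x /= /negP.
have mD1n := measurableI _ _ mD1 (mcn Aplus).
have hD1 : Ir P (fun x => g (Yobs1 x) - g (Yobs0 x)) D1 =
    Ir P (fun x => H1 x - H0 x) D1 + Ir P (fun x => H0 x - G00 x) D1
    - Ir P (fun x => G11 x - G00 x) (D1 `&` [set x | A x = Aplus]).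
  rewrite (@Ir_piece _ _ _ P (fun x => A x == Aplus) _ _ _ D1 mD1 (mc Aplus) iK1 iK2); first last.
  - move=> x Dx; rewrite /Yobs0 /Yobs1 Dx /=.
    by case: (A x) => // _; rewrite ?eZ1 ?eM1 /H1 /H0 /G00 /G11 /=; lra.
  - move=> x Dx /eqP Ax; rewrite /Yobs0 /Yobs1 Dx Ax /H1 /H0 /G00 /G11 /=; lra.
  rewrite (@Ir_piece _ _ _ P (fun x => A x == Aplus) (fun x => H1 x - H0 x) _ _ D1 mD1 (mc Aplus) iH10 iH10) //.
  rewrite (@Ir_piece _ _ _ P (fun x => A x == Aplus) (fun x => H0 x - G00 x) _ _ D1 mD1 (mc Aplus) iH0G iH0G) //.
  have /= e1 := @Ir_sub _ _ _ P _ _ _ mD1p iK2 iGd.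
  have /= e2 := @Ir_add _ _ _ P _ _ _ mD1p iH10 iH0G.
  have /= e3 := @Ir_add _ _ _ P _ _ _ mD1n iH10 iH0G.
  rewrite e1 e2 e3 setE /=. lra.
have iK0 := @intgB _ _ _ P _ _ iH0G iGd.
have mD0m := measurableI _ _ mD0 (mc Aminus).
have mD0n := measurableI _ _ mD0 (mcn Aminus).
have hD0 : Ir P (fun x => g (Yobs1 x) - g (Yobs0 x)) D0 =
    Ir P (fun x => H0 x - G00 x) D0
    - Ir P (fun x => G11 x - G00 x) (D0 `&` [set x | A x = Aminus]).
  rewrite (@Ir_piece _ _ _ P (fun x => A x == Aminus) _ _ _ D0 mD0 (mc Aminus) iK0 iH0G); first last.
  - move=> x Dx; rewrite /Yobs0 /Yobs1 Dx /=.
    by case: (A x) => // _; rewrite ?eP0 /H1 /H0 /G00 /G11 /=; lra.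
  - move=> x Dx /eqP Ax; rewrite /Yobs0 /Yobs1 Dx Ax /= eAm0 /H1 /H0 /G00 /G11 /=; lra.
  rewrite (@Ir_piece _ _ _ P (fun x => A x == Aminus) (fun x => H0 x - G00 x) _ _ D0 mD0 (mc Aminus) iH0G iH0G) //.
  have /= e1 := @Ir_sub _ _ _ P _ _ _ mD0m iH0G iGd.
  rewrite e1 setE /=; lra.
have mD1A : measurable (D1 `&` [set x | A x = Aplus]) by exact: measurableI.
have mD0A : measurable (D0 `&` [set x | A x = Aminus]) by exact: measurableI.
have ht1 : Ir P (fun x => G11 x - G00 x) (D1 `&` [set x | A x = Aplus]) =
    tau * pr P (D1 `&` [set x | A x = Aplus]).
  exact: (@Ir_mul _ _ _ P _ _ tau mD1A iGd erefl).
have ht0 : Ir P (fun x => G11 x - G00 x) (D0 `&` [set x | A x = Aminus]) =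
    tau * pr P (D0 `&` [set x | A x = Aminus]).
  apply: (@Ir_mul _ _ _ P _ _ tau mD0A iGd).
  rewrite htau /cexp (@Ir_ext _ _ _ P (fun x => G11 x - G00 x) (fun x => g (Y0 Aminus false x) - G00 x) _ (fun x _ => ltac:(by rewrite /= eAm0))).
  by [].
have setU1 S : [set x | A x <> Azero] `&` S =
    (S `&` [set x | A x = Aplus]) `|` ([set x | A x = Aminus] `&` (S `&` [set x | A x <> Azero])).
  apply/seteqP; split => x /=.
  - by case=> + Sx; case E : (A x) => h //; [right|left].
  - by case=> [[Sx ->]|[E [Sx h]]].
have setM0 : [set x | A x = Aminus] `&` (D0 `&` [set x | A x <> Azero]) = D0 `&` [set x | A x = Aminus].
  apply/seteqP; split => x /=; first by case=> E [].
  by case=> Dx E; split=> //; split=> //; rewrite E.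
have mAnz : measurable [set x | A x <> Azero].
  by rewrite -setNE; exact: mcn.
have prsplit S : measurable S ->
    pr P ([set x | A x <> Azero] `&` S) = pr P (S `&` [set x | A x = Aplus]) +
      pr P ([set x | A x = Aminus] `&` (S `&` [set x | A x <> Azero])).
  move=> mS; rewrite setU1 pr_U //; first exact: measurableI.
  - by apply: measurableI => //; exact: measurableI.
  - by apply/disj_setPS => x /= [[_ ->] []].
set P1 := pr P D1.
set P0 := pr P D0.
have P1gt : 0 < P1 by [].
have P0gt : 0 < P0 by [].
set N1 := pr P ([set x | A x <> Azero] `&` D1).
set N0 := pr P ([set x | A x <> Azero] `&` D0).
set a1 := pr P (D1 `&` [set x | A x = Aplus]).
set b0 := pr P (D0 `&` [set x | A x = Aminus]).
have eND S : pr P (S `&` [set x | A x <> Azero]) = pr P ([set x | A x <> Azero] `&` S).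
  by rewrite setIC.
have hM1 : pr P ([set x | A x = Aminus] `&` (D1 `&` [set x | A x <> Azero])) = eps * N1.
  rewrite /N1; apply: (@split_eps _ _ _ _ _ (prsplit _ mD1) (pr_ge0 _ _) (pr_ge0 _ _)).
  by move: he1; rewrite /cprob -/(pr P _) -/(pr P _) eND.
have hM0 : pr P ([set x | A x = Aminus] `&` (D0 `&` [set x | A x <> Azero])) = eps * N0.
  rewrite /N0; apply: (@split_eps _ _ _ _ _ (prsplit _ mD0) (pr_ge0 _ _) (pr_ge0 _ _)).
  by move: he0; rewrite /cprob -/(pr P _) -/(pr P _) eND.
have ha1 : a1 = (1 - eps) * N1.
  by have := prsplit _ mD1; rewrite hM1 -/N1 -/a1; lra.
have hb0 : b0 = eps * N0 by rewrite /b0 -setM0 hM0.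
have hN1 : N1 / P1 <= pi by [].
have hN0 : N0 / P0 <= pi by [].
have P1n0 : P1 != 0 by rewrite gt_eqF.
have P0n0 : P0 != 0 by rewrite gt_eqF.
have hmu : mu * P1 = Ir P (fun x => H1 x - H0 x) D1.
  by change (Ir P (fun x => H1 x - H0 x) D1 / P1 * P1 = Ir P (fun x => H1 x - H0 x) D1); rewrite divfK.
have hpt' : Ir P (fun x => H0 x - G00 x) D1 / P1 = Ir P (fun x => H0 x - G00 x) D0 / P0 by exact: hpt.
have key : cexp P (fun x => g (Yobs1 x) - g (Yobs0 x)) D1 - cexp P (fun x => g (Yobs1 x) - g (Yobs0 x)) D0
    = mu - tau * (a1 / P1 - b0 / P0).
  change (Ir P (fun x => g (Yobs1 x) - g (Yobs0 x)) D1 / P1 - Ir P (fun x => g (Yobs1 x) - g (Yobs0 x)) D0 / P0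
    = mu - tau * (a1 / P1 - b0 / P0)).
  rewrite hD1 hD0 ht1 ht0 -hmu -/a1 -/b0.
  exact: (@key_alg _ _ _ _ _ _ _ _ _ P1n0 P0n0 hpt').
rewrite key.
have q1 : 0 <= N1 / P1 by apply: divr_ge0; [exact: pr_ge0|exact: ltW].
have q0 : 0 <= N0 / P0 by apply: divr_ge0; [exact: pr_ge0|exact: ltW].
have e1 : 0 <= eps <= 1 by [].
move: (hpi) (e1) => /andP[pi0 pi1] /andP[eps0 eps1].
apply: (@alg_main _ pi eps mu tau (a1 / P1) (b0 / P0)) => //.
- rewrite ha1 -mulrA; apply/andP; split; first by apply: mulr_ge0 => //; lra.
  nra.
- rewrite hb0 -mulrA; apply/andP; split; first by apply: mulr_ge0.
  nra.
Qed.
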